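(* Let $\mathbb{A}$ be a reduced medial algebra of dimension at least $2$ over a field of characteristic not $2,3$. If $c_1$ is a semi-simple nonzero idempotent, then for any nonzero idempotent $c_2$ the idempotent $c_1c_2$ is also semi-simple and $\operatorname{spec}(c_1)=\operatorname{spec}(c_1c_2)$.
   Context: All algebras commutative, possibly nonassociative, finite-dimensional. Medial: $(xy)(zw)=(xz)(yw)$ identically. Reduced: $\ker L_c=0$ for every nonzero idempotent $c$, where $L_c:x\mapsto cx$. $\operatorname{spec}(c)$ is the multiset of roots of the characteristic polynomial of $L_c$. An idempotent $c$ is semi-simple if $\mathbb{A}$ is the direct sum of the eigenspaces of $L_c$. *)

(* Defs.v *)
From HB Require Import structures.
From mathcomp Require Import all_boot all_order all_algebra.
Set Implicit Arguments. Unset Strict Implicit. Unset Printing Implicit Defensive.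
Import Order.TTheory GRing.Theory Num.Theory.
Local Open Scope ring_scope.

(* A finite-dimensional (possibly nonassociative) algebra over a field K of
   dimension n is modelled as K^n = 'rV[K]_n with a product
   mul : 'rV_n -> 'rV_n -> 'rV_n, bilinear hypotheses stated in the theorem. *)

Definition Lmx (K : fieldType) (n : nat)
  (mul : 'rV[K]_n -> 'rV[K]_n -> 'rV[K]_n) (c : 'rV[K]_n) : 'M[K]_n :=
  lin1_mx (mul c).

Definition is_idempotent (K : fieldType) (n : nat)
  (mul : 'rV[K]_n -> 'rV[K]_n -> 'rV[K]_n) (c : 'rV[K]_n) : Prop :=
  mul c c = c.

Definition medial (K : fieldType) (n : nat)
  (mul : 'rV[K]_n -> 'rV[K]_n -> 'rV[K]_n) : Prop :=
  forall x y z w, mul (mul x y) (mul z w) = mul (mul x z) (mul y w).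

Definition reduced (K : fieldType) (n : nat)
  (mul : 'rV[K]_n -> 'rV[K]_n -> 'rV[K]_n) : Prop :=
  forall c, is_idempotent mul c -> c != 0 ->
    forall x, mul c x = 0 -> x = 0.

Definition semisimple (K : fieldType) (n : nat)
  (mul : 'rV[K]_n -> 'rV[K]_n -> 'rV[K]_n) (c : 'rV[K]_n) : Prop :=
  exists2 s : seq K, uniq s &
    mxdirect (\sum_(a <- s) eigenspace (Lmx mul c) a)
    /\ (\sum_(a <- s) eigenspace (Lmx mul c) a :=: 1%:M)%MS.

(* spec(c): the multiset of roots of the characteristic polynomial of L_c;
   two such multisets (over an algebraic closure) coincide iff the monic
   characteristic polynomials coincide. *)
Definition spec (K : fieldType) (n : nat)
  (mul : 'rV[K]_n -> 'rV[K]_n -> 'rV[K]_n) (c : 'rV[K]_n) : {poly K} :=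
  char_poly (Lmx mul c).

(* Main.v *)
Require Import Defs.
From HB Require Import structures.
From mathcomp Require Import all_boot all_order all_algebra.
Import GRing.Theory.
Local Open Scope ring_scope.

Lemma LmxE {K : fieldType} {n : nat}
  {mul : 'rV[K]_n -> 'rV[K]_n -> 'rV[K]_n}
  (mul_linear : forall x, linear (mul x)) c x : x *m Lmx mul c = mul c x.
Proof.
pose f : {linear 'rV[K]_n -> 'rV[K]_n} :=
  HB.pack (mul c) (GRing.isLinear.Build K _ _ *:%R (mul c) (mul_linear c)).
exact: (mul_rV_lin1 f).
Qed.

Lemma char_poly_conj (K : fieldType) (n : nat) (A P : 'M[K]_n) :
  P \in unitmx -> char_poly (invmx P *m A *m P) = char_poly A.
Proof.
move=> Pu; rewrite /char_poly /char_poly_mx.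
set f := map_mx (@polyC K).
have -> : 'X%:M - f (invmx P *m A *m P) = f (invmx P) *m ('X%:M - f A) *m f P.
  rewrite /f !map_mxM mulmxBr mulmxBl; congr (_ - _).
  by rewrite scalar_mxC -mulmxA -map_mxM mulVmx // map_mx1 mulmx1.
rewrite !det_mulmx /f !det_map_mx mulrC mulrA -rmorphM -det_mulmx mulmxV //.
by rewrite det1 rmorph1 mul1r.
Qed.

Lemma eig_conj {K : fieldType} {n : nat} {A P : 'M[K]_n} a :
  P \in unitmx ->
  (eigenspace (invmx P *m A *m P) a :=: eigenspace A a *m P)%MS.
Proof.
move=> Pu; apply/eqmxP/andP; split.
  set E := eigenspace _ a.
  rewrite -{1}(mulmxKV Pu E) submxMr //; apply/eigenspaceP.
  have := (eigenspaceP (submx_refl E)) => /(congr1 (mulmxr (invmx P))) /=.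
  by rewrite !mulmxA mulmxK // -scalemxAl.
apply/eigenspaceP; rewrite !mulmxA mulmxK //.
by rewrite (eigenspaceP (submx_refl _)) -scalemxAl.
Qed.

Lemma sum_conj {K : fieldType} {n : nat} {A P : 'M[K]_n} (s : seq K) :
  P \in unitmx ->
  ((\sum_(a <- s) eigenspace (invmx P *m A *m P) a)%MS :=:
     (\sum_(a <- s) eigenspace A a)%MS *m P)%MS.
Proof.
move=> Pu; elim: s => [|a s IH].
  by rewrite !big_nil mul0mx; apply: eqmx_refl.
rewrite !big_cons; apply: eqmx_trans _ (eqmx_sym (addsmxMr _ _ _)).
exact: adds_eqmx (eig_conj a Pu) IH.
Qed.

Lemma ss_conj (K : fieldType) (n : nat) (A P : 'M[K]_n) (s : seq K) :
  P \in unitmx ->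
  mxdirect (\sum_(a <- s) eigenspace A a) ->
  (\sum_(a <- s) eigenspace A a :=: 1%:M)%MS ->
  mxdirect (\sum_(a <- s) eigenspace (invmx P *m A *m P) a)
  /\ (\sum_(a <- s) eigenspace (invmx P *m A *m P) a :=: 1%:M)%MS.
Proof.
move=> Pu hd hf; split.
  apply/mxdirectP => /=; move/mxdirectP: hd => /= hd.
  rewrite (sum_conj s Pu) mxrankMfree ?row_free_unit // hd.
  apply: eq_bigr => a _.
  by rewrite (eig_conj a Pu) mxrankMfree ?row_free_unit.
apply: eqmx_trans (sum_conj s Pu) _.
apply: eqmx_trans (eqmxMr P hf) _; rewrite mul1mx.
by apply/eqmxP; rewrite submx1 sub1mx row_full_unit.
Qed.

Theorem proposition4p3 (K : fieldType) (n : nat)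
  (mul : 'rV[K]_n -> 'rV[K]_n -> 'rV[K]_n)
  (mul_linear : forall x, linear (mul x))
  (mulC : forall x y, mul x y = mul y x)
  (hmed : medial mul)
  (hred : reduced mul)
  (hdim : (2 <= n)%N)
  (hchar2 : (2 \notin [pchar K])%N)
  (hchar3 : (3 \notin [pchar K])%N)
  (c1 c2 : 'rV[K]_n)
  (h1 : is_idempotent mul c1) (h1nz : c1 != 0) (h1ss : semisimple mul c1)
  (h2 : is_idempotent mul c2) (h2nz : c2 != 0) :
  semisimple mul (mul c1 c2) /\ spec mul c1 = spec mul (mul c1 c2).
Proof.
have LE := LmxE mul_linear.
have Bu : Lmx mul c2 \in unitmx.
  rewrite -row_free_unit -kermx_eq0 -submx0; apply/row_subP => i.
  have /sub_kermxP := row_sub i (kermx (Lmx mul c2)).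
  by rewrite LE => /(hred c2 h2 h2nz) ->; rewrite sub0mx.
have BC : Lmx mul c2 *m Lmx mul (mul c1 c2) = Lmx mul c1 *m Lmx mul c2.
  apply/row_matrixP => i; rewrite !rowE !mulmxA !LE.
  have := hmed c2 c1 c2 (delta_mx 0 i).
  by rewrite (mulC c2 c1) h2.
have HC : Lmx mul (mul c1 c2) = invmx (Lmx mul c2) *m Lmx mul c1 *m Lmx mul c2.
  by rewrite -mulmxA -BC mulKmx.
split; last by rewrite /spec HC char_poly_conj.
case: h1ss => s us [hd hf]; exists s => //; rewrite HC.
exact: ss_conj.
Qed.
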